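(* For every integer $n\ge 1$, the functions of $r\in\mathbb N$ given by $\sum_{i=0}^{w_{n-1}(r)}|\varphi^i(\xi)|$, by $w_n(r)$, and by $\exp^n(r)$ are pairwise $\simeq$-equivalent.
   Context: Let $F_2$ be the free group on $\xi,\nu$ and let $\varphi:F_2\to F_2$ be the automorphism $\varphi(\xi)=\xi\nu\xi$, $\varphi(\nu)=\xi$; $|\cdot|$ denotes word length with respect to $\{\xi,\nu\}$. Define $w_0(r)=r$ and inductively $w_n(r)=|\varphi^{w_{n-1}(r)}(\xi)|$ for $r\in\mathbb N$. $\exp^n$ is the $n$-fold composition of the exponential function. For functions $f,g$, $f\preceq g$ means there is $C>0$ with $f(x)\le C\,g(Cx)+Cx$ for all $x$, and $f\simeq g$ means $f\preceq g$ and $g\preceq f$. *)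

(* Defs.v *)
From Stdlib Require Import Reals List Arith.
Open Scope R_scope.

Inductive letter := Xi | Nu | XiInv | NuInv.

Definition linv (a : letter) : letter :=
  match a with Xi => XiInv | Nu => NuInv | XiInv => Xi | NuInv => Nu end.

Definition letter_eqb (a b : letter) : bool :=
  match a, b with
  | Xi, Xi | Nu, Nu | XiInv, XiInv | NuInv, NuInv => true
  | _, _ => false end.

(* Free reduction: elements of F_2 are represented by reduced words. *)
Fixpoint red (w : list letter) : list letter :=
  match w with
  | nil => nil
  | a :: w' =>
      match red w' with
      | b :: u => if letter_eqb b (linv a) then u else a :: b :: u
      | nil => a :: nil
      end
  end.

Definition phi_letter (a : letter) : list letter :=
  match a with
  | Xi => Xi :: Nu :: Xi :: nil
  | Nu => Xi :: nil
  | XiInv => XiInv :: NuInv :: XiInv :: nil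
  | NuInv => XiInv :: nil
  end.

Definition phi_word (w : list letter) : list letter := red (flat_map phi_letter w).

Definition phi_iter_xi (i : nat) : list letter := Nat.iter i phi_word (Xi :: nil).

Definition len_phi (i : nat) : nat := length (phi_iter_xi i).

Fixpoint wn (n r : nat) : nat :=
  match n with
  | O => r
  | S m => len_phi (wn m r)
  end.

Fixpoint sum_len (m : nat) : nat :=
  match m with
  | O => len_phi 0
  | S k => (sum_len k + len_phi (S k))%nat
  end.

Definition expn_iter (n : nat) (x : R) : R := Nat.iter n exp x.

(* f <= g : exists C > 0 with f(x) <= C g(Cx) + Cx for all x in N
   (C is taken a positive integer so that g(Cx) makes sense on N). *)
Definition preceq (f g : nat -> R) : Prop :=
  exists C : nat, (0 < C)%nat /\
    forall x : nat, f x <= INR C * g (C * x)%nat + INR C * INR x.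

Definition simeq (f g : nat -> R) : Prop := preceq f g /\ preceq g f.

(* Main.v *)
Require Import Defs.
From Stdlib Require Import Reals List Arith Lia Lra.
Open Scope R_scope.

Definition posl (a:letter) := match a with Xi|Nu => true | _ => false end.
Definition posw w := forallb posl w.

Lemma red_pos w : posw w = true -> red w = w.
Proof.
  induction w as [|a w IH]; simpl; auto. intros H.
  apply andb_prop in H as [Ha Hw]. rewrite IH by auto.
  destruct w as [|b u]; auto.
  destruct a, b; simpl in *; try discriminate; reflexivity.
Qed.

Fixpoint cx (w : list letter) : nat := match w with nil => 0%nat | Xi :: t => S (cx t) | _ :: t => cx t end.
Fixpoint cn (w : list letter) : nat := match w with nil => 0%nat | Nu :: t => S (cn t) | _ :: t => cn t end.

Lemma len_pos w : posw w = true -> length w = (cx w + cn w)%nat.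
Proof.
  induction w as [|a w IH]; simpl; auto. intros H.
  apply andb_prop in H as [Ha Hw]. destruct a; simpl in *; try discriminate; rewrite IH by auto; lia.
Qed.

Lemma flat_facts w : posw w = true ->
  posw (flat_map phi_letter w) = true /\
  cx (flat_map phi_letter w) = (2 * cx w + cn w)%nat /\
  cn (flat_map phi_letter w) = cx w.
Proof.
  induction w as [|a w IH]; simpl; auto. intros H.
  apply andb_prop in H as [Ha Hw]. destruct (IH Hw) as [H1 [H2 H3]].
  destruct a; simpl in *; try discriminate; rewrite ?H1, ?H2, ?H3; repeat split; lia.
Qed.

Definition X i := cx (phi_iter_xi i).
Definition Y i := cn (phi_iter_xi i).

Lemma iter_facts i : posw (phi_iter_xi i) = true /\
  phi_iter_xi (S i) = flat_map phi_letter (phi_iter_xi i).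
Proof.
  induction i as [|i IH].
  - split; reflexivity.
  - destruct IH as [P E].
    assert (P' : posw (phi_iter_xi (S i)) = true).
    { rewrite E. apply flat_facts; auto. }
    split; auto.
    change (phi_iter_xi (S (S i))) with (phi_word (phi_iter_xi (S i))).
    unfold phi_word. apply red_pos. apply flat_facts; auto.
Qed.

Lemma XY i : X (S i) = (2 * X i + Y i)%nat /\ Y (S i) = X i /\ (Y i <= X i)%nat
  /\ len_phi i = (X i + Y i)%nat.
Proof.
  destruct (iter_facts i) as [P E].
  destruct (flat_facts _ P) as [P1 [H2 H3]].
  unfold X, Y, len_phi. rewrite E, H2, H3.
  split; [reflexivity|]. split; [reflexivity|]. split.
  - destruct i. simpl. lia.
    destruct (iter_facts i) as [Pi Ei].
    destruct (flat_facts _ Pi) as [_ [G2 G3]].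
    rewrite Ei, G2, G3. lia.
  - apply len_pos; auto.
Qed.

Lemma A_step i : (2 * len_phi i <= len_phi (S i) <= 3 * len_phi i)%nat.
Proof.
  destruct (XY i) as [a [b [c d]]]. destruct (XY (S i)) as [_ [_ [_ d']]].
  rewrite d, d', a, b. lia.
Qed.

Lemma A0 : len_phi 0 = 1%nat. Proof. reflexivity. Qed.

Lemma A_bounds i : (2 ^ i <= len_phi i <= 3 ^ i)%nat.
Proof.
  induction i as [|i IH]. rewrite A0; simpl; lia.
  pose proof (A_step i). simpl. lia.
Qed.

Lemma A_mono i j : (i <= j)%nat -> (len_phi i <= len_phi j)%nat.
Proof.
  induction 1. lia. pose proof (A_step m). lia.
Qed.

Lemma sum_bounds m : (len_phi m <= sum_len m <= 2 * len_phi m)%nat.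
Proof.
  induction m as [|m IH]; simpl. rewrite A0; lia.
  pose proof (A_step m). lia.
Qed.

Lemma sum_mono i j : (i <= j)%nat -> (sum_len i <= sum_len j)%nat.
Proof. induction 1. lia. simpl. lia. Qed.

Lemma wn_mono n a b : (a <= b)%nat -> (wn n a <= wn n b)%nat.
Proof. intros H. induction n; simpl; auto. apply A_mono; auto. Qed.

Lemma wn_pos n r : (1 <= n)%nat -> (1 <= wn n r)%nat.
Proof. intros H. destruct n. lia. simpl. pose proof (A_bounds (wn n r)).
  pose proof (Nat.pow_le_mono_r 2 0 (wn n r) ltac:(lia) ltac:(lia)). simpl in *; lia. Qed.

Fixpoint T2 (n m : nat) : nat := match n with O => m | S k => 2 ^ (T2 k m) end.
Fixpoint T3 (n m : nat) : nat := match n with O => m | S k => 3 ^ (T3 k m) end.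

Lemma wn_T3 n r : (wn n r <= T3 n r)%nat.
Proof. induction n; simpl; auto. pose proof (A_bounds (wn n r)).
  pose proof (Nat.pow_le_mono_r 3 _ _ ltac:(lia) IHn). lia. Qed.

Lemma wn_T2 n r : (T2 n r <= wn n r)%nat.
Proof. induction n; simpl; auto. pose proof (A_bounds (wn n r)).
  pose proof (Nat.pow_le_mono_r 2 _ _ ltac:(lia) IHn). lia. Qed.

Lemma T2_D n m : (1 <= m)%nat -> (1 <= T2 n m /\ 2 * T2 n m <= T2 n (2 * m))%nat.
Proof.
  intros Hm. induction n. simpl. lia.
  change (T2 (S n) m) with (2 ^ T2 n m)%nat. change (T2 (S n) (2*m)) with (2 ^ T2 n (2*m))%nat.
  destruct IHn as [a b]. split.
  - pose proof (Nat.pow_le_mono_r 2 0 (T2 n m) ltac:(lia) ltac:(lia)). simpl in *; lia.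
  - rewrite <- Nat.pow_succ_r'. apply Nat.pow_le_mono_r; lia.
Qed.

Lemma exp_le a b : a <= b -> exp a <= exp b.
Proof. intros [H|H]. left; apply exp_increasing; auto. subst; lra. Qed.

Lemma exp_INR_lo k : INR (2 ^ k) <= exp (INR k).
Proof.
  induction k. simpl. rewrite exp_0. lra.
  rewrite S_INR, exp_plus. rewrite Nat.pow_succ_r', mult_INR.
  pose proof (exp_ineq1 1 ltac:(lra)). pose proof (pos_INR (2^k)).
  simpl (INR 2). nra.
Qed.

Lemma exp_INR_hi k : exp (INR k) <= INR (4 ^ k).
Proof.
  induction k. simpl. rewrite exp_0. lra.
  rewrite S_INR, exp_plus. rewrite Nat.pow_succ_r', mult_INR.
  pose proof exp_le_3. pose proof (exp_pos (INR k)). pose proof (exp_pos 1).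
  simpl (INR 4). nra.
Qed.

Lemma E_mono n a b : a <= b -> expn_iter n a <= expn_iter n b.
Proof. intros H; induction n; simpl; auto. apply exp_le; auto. Qed.

Lemma E_ge1 n a : (1 <= n)%nat -> 0 <= a -> 1 <= expn_iter n a.
Proof.
  intros Hn Ha. destruct n. lia. simpl.
  assert (0 <= expn_iter n a).
  { induction n; simpl; auto. left; apply exp_pos. }
  rewrite <- exp_0. apply exp_le; auto.
Qed.

Lemma nat_ineq1 t : (1 <= t)%nat -> (4 * 3 ^ t <= 2 ^ (4 * t))%nat.
Proof.
  intros H. rewrite Nat.pow_mul_r. simpl (2^4)%nat.
  induction H. simpl. lia.
  rewrite !Nat.pow_succ_r'. lia.
Qed.

Lemma Q n r : 4 * INR (T3 (S n) r) <= expn_iter (S n) (INR (4 * r + 4)).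
Proof.
  induction n.
  - simpl T3. simpl expn_iter. eapply Rle_trans; [|apply exp_INR_lo].
    replace 4 with (INR 4) by (simpl; lra). rewrite <- mult_INR. apply le_INR.
    replace (r + (r + (r + (r + 0))) + 4)%nat with (4 * (r+1))%nat by lia.
    rewrite Nat.pow_mul_r. simpl (2^4)%nat.
    pose proof (Nat.pow_le_mono_l 3 16 r ltac:(lia)).
    rewrite Nat.pow_add_r. simpl (16^1)%nat. lia.
  - change (expn_iter (S (S n)) (INR (4 * r + 4))) with (exp (expn_iter (S n) (INR (4 * r + 4)))).
    change (T3 (S (S n)) r) with (3 ^ T3 (S n) r)%nat.
    set (t := T3 (S n) r) in *.
    assert (Ht : (1 <= t)%nat).
    { unfold t; simpl. pose proof (Nat.pow_le_mono_r 3 0 (T3 n r) ltac:(lia) ltac:(lia)). simpl in *; lia. }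
    eapply Rle_trans; [|apply exp_le; apply IHn].
    replace (4 * INR t) with (INR (4 * t)) by (rewrite mult_INR; simpl; lra).
    eapply Rle_trans; [|apply exp_INR_lo].
    replace 4 with (INR 4) by (simpl; lra). rewrite <- mult_INR. apply le_INR.
    apply nat_ineq1; auto.
Qed.

Lemma R_lo n r : expn_iter n (INR r) <= INR (T2 n (2 ^ n * (r + 1))).
Proof.
  induction n.
  - simpl. apply le_INR. lia.
  - simpl expn_iter. eapply Rle_trans; [apply exp_le; apply IHn|].
    eapply Rle_trans; [apply exp_INR_hi|]. apply le_INR.
    set (m := (2 ^ n * (r + 1))%nat).
    assert (Hm : (1 <= m)%nat).
    { unfold m. pose proof (Nat.pow_le_mono_r 2 0 n ltac:(lia) ltac:(lia)). simpl in *; nia. }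
    destruct (T2_D n m Hm) as [_ b].
    replace (2 ^ S n * (r + 1))%nat with (2 * m)%nat by (unfold m; rewrite Nat.pow_succ_r'; lia).
    change (T2 (S n) (2*m)) with (2 ^ T2 n (2*m))%nat. replace 4%nat with (2^2)%nat by reflexivity. rewrite <- Nat.pow_mul_r.
    apply Nat.pow_le_mono_r; lia.
Qed.

Lemma mk_pre (f g : nat -> R) K : (0 < K)%nat ->
  (forall x, f x <= INR K * g (K * x)%nat) -> preceq f g.
Proof.
  intros HK H. exists K; split; auto. intros x.
  pose proof (H x). pose proof (pos_INR K). pose proof (pos_INR x). nra.
Qed.

Theorem lemma5p1 : forall n : nat, (1 <= n)%nat ->
  let F1 := fun r : nat => INR (sum_len (wn (n - 1) r)) in
  let F2 := fun r : nat => INR (wn n r) in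
  let F3 := fun r : nat => expn_iter n (INR r) in
  simeq F1 F2 /\ simeq F2 F3 /\ simeq F1 F3.
Proof.
  intros n Hn F1 F2 F3.
  destruct n as [|k]; [lia|].
  set (n := S k) in *.
  assert (B12 : forall x, F2 x <= F1 x /\ F1 x <= 2 * F2 x).
  { intros x. unfold F1, F2, n. simpl wn. rewrite Nat.sub_0_r. pose proof (sum_bounds (wn k x)).
    split. apply le_INR; lia. replace 2 with (INR 2) by (simpl; lra).
    rewrite <- mult_INR. apply le_INR; lia. }
  assert (F2mono : forall a b, (a <= b)%nat -> F2 a <= F2 b).
  { intros; unfold F2; apply le_INR, wn_mono; auto. }
  assert (F1mono : forall a b, (a <= b)%nat -> F1 a <= F1 b).
  { intros; unfold F1; apply le_INR, sum_mono, wn_mono; auto. }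
  assert (E0 : forall x, 1 <= F3 x).
  { intros x; apply E_ge1; auto; apply pos_INR. }
  assert (F3mono : forall a b, (a <= b)%nat -> F3 a <= F3 b).
  { intros; unfold F3; apply E_mono, le_INR; auto. }
  assert (U : forall x, (1 <= x)%nat -> F2 x <= F3 (8 * x)%nat).
  { intros x Hx. unfold F2, F3, n.
    pose proof (Q k x). pose proof (wn_T3 (S k) x).
    apply le_INR in H0.
    assert (expn_iter (S k) (INR (4 * x + 4)) <= expn_iter (S k) (INR (8 * x))).
    { apply E_mono, le_INR; lia. }
    pose proof (E_ge1 (S k) (INR (4*x+4)) ltac:(lia) (pos_INR _)). lra. }
  assert (L : forall x, (1 <= x)%nat -> F3 x <= F2 (2 ^ S n * x)%nat).
  { intros x Hx. unfold F2, F3.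
    eapply Rle_trans; [apply R_lo|]. apply le_INR.
    eapply Nat.le_trans; [apply wn_T2|]. apply wn_mono.
    rewrite Nat.pow_succ_r'. nia. }
  assert (L0 : F3 0%nat <= INR (T2 n (2 ^ n))).
  { unfold F3. eapply Rle_trans; [apply R_lo|]. right. f_equal. f_equal. lia. }
  assert (W0 : 1 <= F2 0%nat).
  { unfold F2. replace 1 with (INR 1) by reflexivity. apply le_INR, wn_pos. unfold n; lia. }
  set (K1 := (16 + 2 * wn n 0)%nat).
  set (K2 := (2 ^ S n + T2 n (2 ^ n))%nat).
  assert (HK1 : (16 <= K1)%nat) by (unfold K1; lia).
  assert (HK1' : INR (wn n 0) * 2 <= INR K1).
  { replace 2 with (INR 2) by (simpl; lra). rewrite <- mult_INR. apply le_INR. unfold K1; lia. }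
  assert (HK1'' : 16 <= INR K1).
  { replace 16 with (INR 16) by (simpl; lra). apply le_INR; auto. }
  assert (HK2a : (2 ^ S n <= K2)%nat) by (unfold K2; lia).
  assert (HK2b : INR (T2 n (2 ^ n)) <= INR K2) by (apply le_INR; unfold K2; lia).
  assert (HK2c : 1 <= INR K2).
  { replace 1 with (INR 1) by reflexivity. apply le_INR.
    pose proof (Nat.pow_le_mono_r 2 0 (S n) ltac:(lia) ltac:(lia)). simpl in *. lia. }
  assert (UP : forall x, 2 * F2 x <= INR K1 * F3 (K1 * x)%nat).
  { intros x. destruct x as [|x].
    - rewrite Nat.mul_0_r. pose proof (E0 0%nat). unfold F2 in *. nra.
    - pose proof (U (S x) ltac:(lia)). pose proof (F3mono (8 * S x)%nat (K1 * S x)%nat ltac:(nia)).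
      pose proof (E0 (K1 * S x)%nat). nra. }
  assert (LO : forall x, F3 x <= INR K2 * F2 (K2 * x)%nat).
  { intros x. destruct x as [|x].
    - rewrite Nat.mul_0_r. nra.
    - pose proof (L (S x) ltac:(lia)). pose proof (F2mono (2 ^ S n * S x)%nat (K2 * S x)%nat ltac:(nia)).
      pose proof (W0). pose proof (F2mono 0%nat (K2 * S x)%nat ltac:(lia)). nra. }
  assert (K1pos : (0 < K1)%nat) by lia.
  assert (K2pos : (0 < K2)%nat) by (apply INR_lt; simpl; lra).
  split; [split|split; split].
  - apply (mk_pre _ _ 2%nat); [lia|]. intros x. destruct (B12 x) as [_ h].
    pose proof (F2mono x (2 * x)%nat ltac:(lia)). simpl (INR 2). lra.
  - apply (mk_pre _ _ 1%nat); [lia|]. intros x. destruct (B12 x) as [h _].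
    rewrite Nat.mul_1_l. simpl. lra.
  - apply (mk_pre _ _ K1); auto. intros x. pose proof (UP x).
    pose proof (F2mono 0%nat x ltac:(lia)). lra.
  - apply (mk_pre _ _ K2); auto.
  - apply (mk_pre _ _ K1); auto. intros x. pose proof (UP x). destruct (B12 x). lra.
  - apply (mk_pre _ _ K2); auto. intros x. pose proof (LO x). destruct (B12 (K2 * x)%nat).
    pose proof (pos_INR K2). nra.
Qed.
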